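(* Let $P$ be a finite set of points in $\mathbb{R}^2$ in general position. Any point $p\in P$ is active for at most three points on the first convex layer of $P$.
   Context: Convex layers: $L^1$ is the set of vertices of the convex hull of $P$, and $L^k$ is the set of vertices of the convex hull of $P\setminus(L^1\cup\dots\cup L^{k-1})$. Let $(t,u,v)$ be consecutive points of $L^1$ in clockwise order. A point $p$ is active for $u$ if, upon deleting $u$ from $P$ and recomputing the first and second convex layers, $p$ moves to the first layer. $A(u)$ denotes the set of points active for $u$. *)

(* Defs.v *)
From mathcomp Require Import all_boot all_order all_algebra.
From mathcomp Require Import boolp classical_sets cardinality.
Set Implicit Arguments. Unset Strict Implicit. Unset Printing Implicit Defensive.
Import Order.TTheory GRing.Theory Num.Theory.
Local Open Scope ring_scope.
Local Open Scope classical_set_scope.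

Section Layers.
Variable R : realFieldType.

Definition pt2 := (R * R)%type.

Definition orient (a b c : pt2) : R :=
  (b.1 - a.1) * (c.2 - a.2) - (b.2 - a.2) * (c.1 - a.1).

Definition general_position (P : set pt2) : Prop :=
  forall a b c, P a -> P b -> P c -> a <> b -> b <> c -> a <> c ->
    orient a b c != 0.

Definition in_hull (S : set pt2) (x : pt2) : Prop :=
  exists (n : nat) (s : 'I_n -> pt2) (w : 'I_n -> R),
    [/\ forall i, S (s i),
        forall i, 0 <= w i,
        \sum_(i < n) w i = 1 &
        x = (\sum_(i < n) w i * (s i).1, \sum_(i < n) w i * (s i).2)].

Definition hull_vertices (S : set pt2) : set pt2 :=
  [set x | S x /\ ~ in_hull (S `\ x) x].

(* remaining S k = S \ (L^1 u ... u L^k) *)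
Fixpoint remaining (S : set pt2) (k : nat) : set pt2 :=
  match k with
  | 0 => S
  | k'.+1 => remaining S k' `\` hull_vertices (remaining S k')
  end.

(* layer S k = L^k (k >= 1); layer S 1 = L^1 = vertices of conv(S) *)
Definition layer (S : set pt2) (k : nat) : set pt2 :=
  hull_vertices (remaining S k.-1).

Definition active (P : set pt2) (u p : pt2) : Prop :=
  [/\ layer P 1 u, P p, ~ layer P 1 p & layer (P `\ u) 1 p].

End Layers.

(* Main.v *)
Require Import Defs.
From mathcomp Require Import all_boot all_order all_algebra.
From mathcomp Require Import boolp classical_sets cardinality.
From mathcomp Require Import ring.
Import Order.TTheory GRing.Theory Num.Theory.
Local Open Scope ring_scope.
Local Open Scope classical_set_scope.

Section Aux.
Variable R : realFieldType.
Notation pt := (pt2 R).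

Definition seq_hull (S : set pt) (x : pt) (l : seq (R * pt)) :=
  [/\ forall z, z \in l -> S z.2 /\ 0 <= z.1,
      \sum_(z <- l) z.1 = 1 &
      x = (\sum_(z <- l) z.1 * z.2.1, \sum_(z <- l) z.1 * z.2.2)].

Lemma hull_seqE (S : set pt) x : in_hull S x <-> exists l, seq_hull S x l.
Proof.
split.
  case=> n [s [w [Hs Hw H1 Hx]]].
  exists [seq (w i, s i) | i <- index_enum 'I_n]; split.
  - by move=> z /mapP[i _ ->] /=.
  - by rewrite big_map.
  - by rewrite !big_map.
case=> l [Hl H1 Hx].
pose d : R * pt := (0, (0, 0)).
exists (size l), (fun i : 'I_(size l) => (nth d l i).2),
  (fun i : 'I_(size l) => (nth d l i).1).
have E : forall F : R * pt -> R, \sum_(z <- l) F z = \sum_(i < size l) F (nth d l i).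
  by move=> F; rewrite (big_nth d) big_mkord.
split.
- by move=> i; case: (Hl (nth d l i)) => //; apply: mem_nth.
- by move=> i; case: (Hl (nth d l i)) => //; apply: mem_nth.
- by rewrite -E.
- by rewrite Hx !E.
Qed.

Lemma hull_mono (A B : set pt) x : A `<=` B -> in_hull A x -> in_hull B x.
Proof.
move=> AB [n [s [w [Hs Hw H1 Hx]]]]; exists n, s, w; split => // i.
exact: AB.
Qed.

Lemma argmin_seq (T : eqType) (f : T -> R) (s : seq T) : s != [::] ->
  exists2 x, x \in s & forall y, y \in s -> f x <= f y.
Proof.
elim: s => // a s IH _.
case: (eqVneq s [::]) => [->|ne].
  by exists a; rewrite ?inE // => y; rewrite inE => /eqP ->.
case: (IH ne) => b bs Hb.
case: (leP (f a) (f b)) => H.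
  exists a; first by rewrite inE eqxx.
  move=> y; rewrite inE => /orP[/eqP->//|ys].
  exact: le_trans H (Hb _ ys).
exists b; first by rewrite inE bs orbT.
move=> y; rewrite inE => /orP[/eqP->|ys]; last exact: Hb.
exact: ltW.
Qed.

Lemma sum_partU (l : seq (R * pt)) (U : seq pt) (F : R * pt -> R) : uniq U ->
  \sum_(z <- l | z.2 \in U) F z = \sum_(u <- U) \sum_(z <- l | z.2 == u) F z.
Proof.
elim: U => [|u U IH] /=.
  by move=> _; rewrite big_nil big_pred0 // => z; rewrite in_nil.
case/andP=> uU uniqU.
rewrite big_cons (bigID (fun z : R * pt => z.2 == u)) /= -IH //.
congr (_ + _); apply: eq_bigl => z; rewrite inE.
  by case: (z.2 == u); rewrite ?andbF ?andbT.
case: (eqVneq z.2 u) => [->|] /=; first by rewrite (negbTE uU).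
by rewrite andbT.
Qed.


Lemma sum_split (l : seq (R * pt)) (U : seq pt) (g : pt -> R) : uniq U ->
  \sum_(z <- l) z.1 * g z.2 =
  \sum_(z <- l | z.2 \notin U) z.1 * g z.2 +
  \sum_(u <- U) (\sum_(z <- l | z.2 == u) z.1) * g u.
Proof.
move=> uU; rewrite (bigID (fun z : R * pt => z.2 \in U)) /= addrC.
congr (_ + _); rewrite sum_partU //; apply: eq_bigr => u _.
rewrite mulr_suml; apply: eq_bigr => z /eqP -> //.
Qed.

Lemma reduce (S : set pt) x (l : seq (R * pt)) (U : seq pt) (c : pt -> R) :
  uniq U -> (forall u, u \in U -> S u) -> seq_hull S x l ->
  \sum_(u <- U) c u * 1 = 0 -> \sum_(u <- U) c u * u.1 = 0 ->
  \sum_(u <- U) c u * u.2 = 0 ->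
  (exists2 u, u \in U & 0 < c u) ->
  exists2 k, k \in U & in_hull (S `\ k) x.
Proof.
move=> uU SU [Hl H1 Hx] c1 cx cy [u0 u0U cu0].
pose a u := \sum_(z <- l | z.2 == u) z.1.
have a_ge0 : forall u, 0 <= a u.
  move=> u; rewrite /a big_seq_cond; apply: sumr_ge0 => z /andP[zl _].
  by case: (Hl z zl).
have [k kin kmin] : exists2 k, k \in [seq u <- U | 0 < c u] &
    forall y, y \in [seq u <- U | 0 < c u] -> a k / c k <= a y / c y.
  apply: argmin_seq; apply/eqP => E.
  by have := mem_filter (fun u => 0 < c u) u0 U; rewrite E in_nil cu0 u0U.
move: kin; rewrite mem_filter => /andP[ck kU].
pose t := a k / c k.
pose l' := [seq z <- l | z.2 \notin U] ++ [seq (a u - t * c u, u) | u <- rem k U].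
have key : forall g : pt -> R, \sum_(u <- U) c u * g u = 0 ->
    \sum_(z <- l') z.1 * g z.2 = \sum_(z <- l) z.1 * g z.2.
  move=> g cg; rewrite (sum_split l U g uU) big_cat big_filter big_map /=.
  congr (_ + _).
  have -> : \sum_(u <- U) a u * g u = \sum_(u <- U) (a u - t * c u) * g u.
    under [RHS]eq_bigr => u _ do rewrite mulrBl -mulrA.
    by rewrite sumrB -mulr_sumr cg mulr0 subr0.
  rewrite (perm_big _ (perm_to_rem kU)) big_cons /=.
  by rewrite /t divfK ?lt0r_neq0 // subrr mul0r add0r.
exists k => //; apply/hull_seqE; exists l'; split.
- move=> z; rewrite mem_cat => /orP[|].
    rewrite mem_filter => /andP[zU zl]; case: (Hl z zl) => Sz wz.
    split=> //; split=> // zk; move: zU; rewrite zk kU //.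
  case/mapP=> u; rewrite (mem_rem_uniq _ uU) inE => /andP[uk uUU] -> /=.
  split; first by split; [exact: SU | exact/eqP].
  rewrite subr_ge0; case: (leP (c u) 0) => cu.
    apply: le_trans (a_ge0 u); apply: mulr_ge0_le0 => //.
    by rewrite /t divr_ge0 // ltW.
  have := kmin u; rewrite mem_filter cu uUU => /(_ isT) H.
  rewrite -[a u](divfK (lt0r_neq0 cu)); by rewrite /t ler_pM2r.
- have := key (fun _ => 1) c1; under eq_bigr do rewrite mulr1.
  by under [X in _ = X -> _]eq_bigr do rewrite mulr1; move=> ->.
- by rewrite (key (fun u => u.1) cx) (key (fun u => u.2) cy).
Qed.

End Aux.

Theorem lemma1 (R : realFieldType) (P : set (pt2 R)) :
  finite_set P -> general_position P ->
  forall (p : pt2 R), P p ->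
  forall (us : seq (pt2 R)), uniq us ->
    (forall u, u \in us -> layer P 1 u /\ active P u p) ->
    (size us <= 3)%N.
Proof.
move=> _ gp p Pp us uus Hus.
case: us uus Hus => [|u1 [|u2 [|u3 [|u4 rest]]]] //= uus Hus.
exfalso.
have Hact : forall u, u \in [:: u1; u2; u3; u4] ->
    [/\ P u, u <> p & ~ in_hull ((P `\ u) `\ p) p].
  move=> u uin.
  have : u \in [:: u1, u2, u3, u4 & rest].
    by move: uin; rewrite !inE => /or4P[]->; rewrite ?orbT.
  move=> /Hus [Lu [_ _ nLp Lp]].
  case: (Lu) => Pu _; case: Lp => _ nH.
  split=> // up; apply: nLp; rewrite -up; exact: Lu.
have inH : in_hull (P `\ p) p.
  have : u1 \in [:: u1, u2, u3, u4 & rest] by rewrite inE eqxx.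
  move=> /Hus [_ [_ _ nLp _]].
  by apply: contrapT => nH; apply: nLp.
case/hull_seqE: inH => l hl.
move: uus; rewrite /= !inE !negb_or => /and5P[/and3P[n12 n13 /andP[n14 _]]
  /and3P[n23 n24 _] /andP[n34 _] _ _].
have U4 : uniq [:: u1; u2; u3; u4].
  by rewrite /= !inE !negb_or n12 n13 n14 n23 n24 n34.
have [P1 _ _] := Hact u1 (mem_head _ _).
have [P2 _ _] : [/\ P u2, _ & _] := Hact u2 ltac:(by rewrite !inE eqxx ?orbT).
have [P3 _ _] : [/\ P u3, _ & _] := Hact u3 ltac:(by rewrite !inE eqxx ?orbT).
have o4 : orient u1 u2 u3 != 0.
  exact: gp P1 P2 P3 (elimN eqP n12) (elimN eqP n23) (elimN eqP n13).
have main : forall c : pt2 R -> R,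
    \sum_(u <- [:: u1; u2; u3; u4]) c u * 1 = 0 ->
    \sum_(u <- [:: u1; u2; u3; u4]) c u * u.1 = 0 ->
    \sum_(u <- [:: u1; u2; u3; u4]) c u * u.2 = 0 ->
    0 < c u4 -> False.
  move=> c h1 hx hy hpos.
  have SU : forall u, u \in [:: u1; u2; u3; u4] -> (P `\ p) u.
    by move=> u /Hact [Pu up _]; split.
  have ex : exists2 u, u \in [:: u1; u2; u3; u4] & 0 < c u.
    by exists u4 => //; rewrite !inE eqxx ?orbT.
  have [k kU hk] := @reduce _ _ _ _ _ c U4 SU hl h1 hx hy ex.
  have [_ _ nk] := Hact k kU; apply: nk; apply: hull_mono hk.
  by move=> y [[Py yp] yk]; rewrite /setD /=; split; [split|].
have e21 : (u2 == u1) = false by rewrite eq_sym (negbTE n12).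
have e31 : (u3 == u1) = false by rewrite eq_sym (negbTE n13).
have e41 : (u4 == u1) = false by rewrite eq_sym (negbTE n14).
have e32 : (u3 == u2) = false by rewrite eq_sym (negbTE n23).
have e42 : (u4 == u2) = false by rewrite eq_sym (negbTE n24).
have e43 : (u4 == u3) = false by rewrite eq_sym (negbTE n34).
pose c z := if z == u1 then orient u2 u3 u4 else if z == u2 then - orient u1 u3 u4
  else if z == u3 then orient u1 u2 u4 else - orient u1 u2 u3.
have cE : forall g : pt2 R -> R,
    \sum_(u <- [:: u1; u2; u3; u4]) c u * g u =
    orient u2 u3 u4 * g u1 - orient u1 u3 u4 * g u2 + orient u1 u2 u4 * g u3
    - orient u1 u2 u3 * g u4.
  move=> g; rewrite !big_cons big_nil /c eqxx e21 eqxx e31 e32 eqxx e41 e42 e43.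
  by rewrite addr0 !addrA !mulNr.
have c1 : \sum_(u <- [:: u1; u2; u3; u4]) c u * 1 = 0.
  by rewrite (cE (fun _ => 1)) /orient; ring.
have cx : \sum_(u <- [:: u1; u2; u3; u4]) c u * u.1 = 0.
  by rewrite (cE (fun u => u.1)) /orient; ring.
have cy : \sum_(u <- [:: u1; u2; u3; u4]) c u * u.2 = 0.
  by rewrite (cE (fun u => u.2)) /orient; ring.
have c4 : c u4 = - orient u1 u2 u3 by rewrite /c e41 e42 e43.
case: (ltrgt0P (orient u1 u2 u3)) o4 => // ho _.
- apply: (main (fun z => - c z)).
  + by rewrite (eq_bigr (fun u => - (c u * 1))) ?sumrN ?c1 ?oppr0 // => u _; rewrite mulNr.
  + by rewrite (eq_bigr (fun u => - (c u * u.1))) ?sumrN ?cx ?oppr0 // => u _; rewrite mulNr.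
  + by rewrite (eq_bigr (fun u => - (c u * u.2))) ?sumrN ?cy ?oppr0 // => u _; rewrite mulNr.
  + by rewrite c4 opprK.
- by apply: (main c) => //; rewrite c4 oppr_gt0.
Qed.
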